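(* Let $N\ge1$, $1\le a\le N$ and $p\ge0$ be integers. For integers $q_1,\dots,q_N$ set $C_2(q_1,\dots,q_N)=\sum_{j=1}^N s_j(s_j-2j)$ with $s_j=q_j-\frac1N\sum_{k=1}^N q_k$. Then for all integers $p_1\ge p_2\ge\dots\ge p_a\ge0$ with $\sum_{i=1}^a p_i=ap$, $$C_2(p_1,\dots,p_a,0,\dots,0)-C_2(\underbrace{p,\dots,p}_{a},0,\dots,0)\ge0,$$ with equality if and only if $p_i=p$ for all $i=1,\dots,a$.
   Context: Here $(p_1,\dots,p_a,0,\dots,0)$ and $(p,\dots,p,0,\dots,0)$ denote $N$-tuples padded with zeros. *)

(* Defs.v *)
From mathcomp Require Import all_boot all_order all_algebra.
Set Implicit Arguments. Unset Strict Implicit. Unset Printing Implicit Defensive.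
Import Order.TTheory GRing.Theory Num.Theory.
Local Open Scope ring_scope.

(* Index j in 1..N is represented by i : 'I_N with j = i + 1. *)
Definition C2 (N : nat) (q : 'I_N -> int) : rat :=
  let mean := (\sum_(k < N) (q k)%:~R) / N%:R in
  \sum_(j < N) (((q j)%:~R - mean) * (((q j)%:~R - mean) - 2 * (j.+1)%:R)).

(* (p_1,...,p_a,0,...,0) as an N-tuple; pp i is p_{i+1} *)
Arguments C2 : clear implicits.
Definition padZ (N a : nat) (pp : nat -> int) : 'I_N -> int :=
  fun i => if (i < a)%N then pp i else 0.
Arguments padZ : clear implicits.

(* Main.v *)
Require Import Defs.
From mathcomp Require Import all_boot all_order all_algebra.
From mathcomp Require Import ring lra zify.
Import Order.TTheory GRing.Theory Num.Theory.
Local Open Scope ring_scope.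

Lemma C2_diff_aux N (u v : 'I_N -> int) (m1 m2 : rat) :
  \sum_(k < N) ((u k)%:~R : rat) = \sum_(k < N) (v k)%:~R -> m1 = m2 ->
  \sum_(j < N) (((u j)%:~R - m1) * (((u j)%:~R - m1) - 2 * (j.+1)%:R)) -
  \sum_(j < N) (((v j)%:~R - m2) * (((v j)%:~R - m2) - 2 * (j.+1)%:R))
  = \sum_(j < N) (((u j)%:~R : rat)^+2 - ((v j)%:~R)^+2
      - 2 * (j.+1)%:R * ((u j)%:~R - (v j)%:~R)).
Proof.
move=> H <-; set m := m1.
rewrite -sumrB.
transitivity (\sum_(j < N) (((u j)%:~R : rat)^+2 - ((v j)%:~R)^+2
      - 2 * (j.+1)%:R * ((u j)%:~R - (v j)%:~R)) -
   \sum_(j < N) (2 * m * ((u j)%:~R - (v j)%:~R))).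
  by rewrite -sumrB; apply: eq_bigr => j _; ring.
have H0 : \sum_(j < N) (((u j)%:~R : rat) - (v j)%:~R) = 0.
  by rewrite sumrB; apply/eqP; rewrite subr_eq0; apply/eqP; exact: H.
by rewrite -mulr_sumr H0 mulr0 subr0.
Qed.

Lemma C2_diff N (u v : 'I_N -> int) :
  \sum_(k < N) ((u k)%:~R : rat) = \sum_(k < N) (v k)%:~R ->
  C2 N u - C2 N v = \sum_(j < N) (((u j)%:~R : rat)^+2 - ((v j)%:~R)^+2
      - 2 * (j.+1)%:R * ((u j)%:~R - (v j)%:~R)).
Proof.
move=> H; rewrite /C2; apply: C2_diff_aux => //.
congr (_ / _); exact: H.
Qed.

Lemma sum_restrict N a (F : nat -> rat) : (a <= N)%N ->
  (forall i, (a <= i)%N -> F i = 0) ->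
  \sum_(j < N) F j = \sum_(i < a) F i.
Proof.
move=> haN hF; rewrite (big_ord_widen _ F haN) [RHS]big_mkcond /=.
apply: eq_bigr => j _; case: ifP => // /negbT; rewrite -leqNgt => h.
by rewrite hF.
Qed.

Lemma sum_pad2 N a (pp qq : nat -> int) (G : nat -> int -> int -> rat) :
  (a <= N)%N -> (forall i, G i 0 0 = 0) ->
  \sum_(j < N) G j (padZ N a pp j) (padZ N a qq j) = \sum_(i < a) G i (pp i) (qq i).
Proof.
move=> haN hG.
rewrite (@sum_restrict N a (fun j : nat => G j (if (j < a)%N then pp j else 0)
   (if (j < a)%N then qq j else 0))) //.
  by apply: eq_bigr => i _ /=; rewrite ltn_ord.
by move=> i hi; rewrite leqNgt in hi; rewrite (negbTE hi).
Qed.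

Theorem mainTheorem6 (N a : nat) (p : int) (pp : nat -> int) :
  (1 <= N)%N -> (1 <= a)%N -> (a <= N)%N -> 0 <= p ->
  (forall i, (i.+1 < a)%N -> pp i.+1 <= pp i) ->
  (forall i, (i < a)%N -> 0 <= pp i) ->
  (\sum_(i < a) pp i) = (a%:Z * p) ->
  0 <= C2 N (padZ N a pp) - C2 N (padZ N a (fun _ => p)) /\
  (C2 N (padZ N a pp) - C2 N (padZ N a (fun _ => p)) = 0 <->
     forall i, (i < a)%N -> pp i = p).
Proof.
move=> hN ha haN hp hstep _ hsum.
pose D (i : nat) : rat := (pp i)%:~R - p%:~R.
have hsumD : \sum_(i < a) D i = 0.
  rewrite sumrB sumr_const card_ord -rmorph_sum hsum rmorphM /=.
  by rewrite -mulr_natl; rewrite subrr.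
have mono : forall i j, (i <= j)%N -> (j < a)%N -> pp j <= pp i.
  move=> i j; elim: j => [|j IH]; first by rewrite leqn0 => /eqP ->.
  rewrite leq_eqVlt => /orP [/eqP -> //|hij] hj.
  apply: le_trans (hstep _ hj) (IH hij (ltnW hj)).
have monoD : forall i j, (i <= j)%N -> (j < a)%N -> D j <= D i.
  by move=> i j hij hj; rewrite /D lerD2r ler_int; apply: mono.
pose S := \sum_(i < a) (i%:R * D i).
have hS : S <= 0.
  have dbl : \sum_(i < a) \sum_(j < a) ((i%:R - j%:R) * (D i - D j)) = 2 * a%:R * S.
    have inner : forall i : 'I_a, \sum_(j < a) ((i%:R - j%:R) * (D i - D j)) =
        a%:R * (i%:R * D i) - D i * (\sum_(j < a) (j%:R : rat)) + S.
      move=> i.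
      transitivity (\sum_(j < a) (i%:R * D i) - \sum_(j < a) (i%:R * D j)
         - \sum_(j < a) (D i * j%:R) + \sum_(j < a) (j%:R * D j)).
        rewrite -sumrB -sumrB -big_split; by apply: eq_bigr => j _ /=; ring.
      have f1 : \sum_(j < a) (i%:R * D j) = 0 by rewrite -mulr_sumr hsumD mulr0.
      have f2 : \sum_(j < a) (D i * j%:R) = D i * (\sum_(j < a) (j%:R : rat)) by rewrite mulr_sumr.
      rewrite f1 f2 sumr_const card_ord subr0; move: (i%:R * D i) => x; by rewrite -(mulr_natl x a).
    rewrite (eq_bigr _ (fun i _ => inner i)).
    rewrite big_split sumrB /=.
    have e1 : \sum_(i < a) (a%:R * (i%:R * D i)) = a%:R * S by rewrite mulr_sumr.
    have e2 : \sum_(i < a) (D i * (\sum_(j < a) (j%:R : rat))) = 0 by rewrite -mulr_suml hsumD mul0r.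
    have e3 : \sum_(i < a) S = S *+ a by rewrite sumr_const card_ord.
    rewrite e1 e2 e3 -mulr_natl; ring.
  have : \sum_(i < a) \sum_(j < a) ((i%:R - j%:R) * (D i - D j)) <= 0.
    apply: sumr_le0 => i _; apply: sumr_le0 => j _.
    case: (leqP i j) => hij.
      rewrite mulr_le0_ge0 //; first by rewrite subr_le0 ler_nat.
      by rewrite subr_ge0; apply: monoD.
    rewrite mulr_ge0_le0 //; first by rewrite subr_ge0 ler_nat ltnW.
    by rewrite subr_le0; apply: monoD (ltnW hij) _.
  rewrite dbl pmulr_rle0 // mulr_gt0 // ltr0n; lia.
have key : C2 N (padZ N a pp) - C2 N (padZ N a (fun _ => p)) =
    \sum_(i < a) (D i)^+2 - 2 * S.
  rewrite C2_diff.
    rewrite (@sum_pad2 N a pp (fun=> p) (fun j x y => (x%:~R : rat)^+2 - (y%:~R)^+2 - 2 * (j.+1)%:R * (x%:~R - y%:~R))) //; last first.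
      by move=> i /=; rewrite !(subrr, mulr0).
    transitivity (\sum_(i < a) (D i)^+2 + 2 * p%:~R * \sum_(i < a) D i - 2 * S - 2 * \sum_(i < a) D i); last first.
      by rewrite hsumD; ring.
    rewrite /S !mulr_sumr -big_split /= -!sumrB; apply: eq_bigr => i _; rewrite /D.
    rewrite -addn1 natrD; ring.
  rewrite (@sum_pad2 N a pp (fun=> p) (fun j x y => (x%:~R : rat))) //.
  rewrite (@sum_pad2 N a pp (fun=> p) (fun j x y => (y%:~R : rat))) //.
  rewrite sumr_const card_ord -rmorph_sum hsum rmorphM /=.
  by rewrite -mulr_natl.
rewrite key; split.
  have : 0 <= \sum_(i < a) (D i)^+2 by apply: sumr_ge0 => i _; rewrite sqr_ge0.
  lra.
split.
  move=> h0.
  have h1 : \sum_(i < a) (D i)^+2 = 0.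
    apply/eqP; rewrite eq_le; apply/andP; split; last by apply: sumr_ge0 => i _; rewrite sqr_ge0.
    lra.
  move=> i hi.
  have h2 := psumr_eq0P (fun (j : 'I_a) (_ : true) => sqr_ge0 (D j)) h1.
  have := h2 (Ordinal hi) isT; rewrite /=.
  move/eqP; rewrite sqrf_eq0 subr_eq0 => /eqP.
  by move/intr_inj.
move=> hall.
have hD : forall i : 'I_a, D i = 0 by move=> i; rewrite /D hall // subrr.
rewrite /S !big1 //.
  by move=> i _; rewrite hD mulr0.
by move=> i _; rewrite hD expr0n.
Qed.
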